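(* Let $H$ be a 2-dimensional non-abelian simply connected Lie group, $u,w$ a basis of left-invariant vector fields with $[u,w]=2u$, and for real $a,b$ with $ab=0$ let $\nabla=\nabla(a,b)$ be the left-invariant torsion-free connection on $H$ with $\nabla_u u=(3+a)u-aw$, $\nabla_u w=au+(3-a)w$, $\nabla_w u=(a-2)u+(3-a)w$, $\nabla_w w=(a+b-1)u+(2-a)w$. If a left-invariant symmetric 2-tensor on $H$ equals $\mathcal{L}\beta$ for some 1-form $\beta$ on $H$, then it also equals $\mathcal{L}\alpha$ for some left-invariant 1-form $\alpha$ on $H$.
   Context: All objects are $C^\infty$. $\mathcal{L}$ is the Killing operator of $\nabla$: $(\mathcal{L}\xi)(x,y)=\tfrac12[(\nabla_x\xi)(y)+(\nabla_y\xi)(x)]$ for 1-forms $\xi$. *)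

(* Defs.v *)
From HB Require Import structures.
From mathcomp Require Import all_boot all_order all_algebra.
From mathcomp Require Import all_classical all_reals all_analysis.
Set Implicit Arguments. Unset Strict Implicit. Unset Printing Implicit Defensive.
Import Order.TTheory GRing.Theory Num.Theory.
Import numFieldNormedType.Exports.
Local Open Scope ring_scope.

(* Concrete model of the 2-dim non-abelian simply connected Lie group H:
   H = R^2 with law (x,y).(x',y') = (x + e^{2y} x', y + y').
   Left-invariant fields: u = e^{2y} d/dx, w = - d/dy, so [u,w] = 2u. *)

Section Defs.
Variable R : realType.

Definition partial1 (f : R -> R -> R) : R -> R -> R :=
  fun x y => derive1 (fun t => f t y) x.
Definition partial2 (f : R -> R -> R) : R -> R -> R :=
  fun x y => derive1 (fun t => f x t) y.

Fixpoint iter_partial (s : seq bool) (f : R -> R -> R) : R -> R -> R :=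
  match s with
  | [::] => f
  | b :: s' => (if b then partial1 else partial2) (iter_partial s' f)
  end.

Definition smooth2 (f : R -> R -> R) : Prop :=
  forall s : seq bool,
    (forall x y, derivable (fun t => iter_partial s f t y) x 1 /\
                 derivable (fun t => iter_partial s f x t) y 1) /\
    continuous (fun p : R * R => iter_partial s f p.1 p.2).

(* frame index: true = u, false = w *)
Definition frameD (i : bool) (h : R -> R -> R) : R -> R -> R :=
  if i then (fun x y => expR (2 * y) * partial1 h x y)
  else (fun x y => - partial2 h x y).

(* coefficients (in the frame u,w) of nabla_{e_i} e_j for nabla(a,b) *)
Definition nabla_coef (a b : R) (i j : bool) : R * R :=
  match i, j with
  | true, true => (3 + a, - a)
  | true, false => (a, 3 - a)
  | false, true => (a - 2, 3 - a)
  | false, false => (a + b - 1, 2 - a)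
  end.

(* a 1-form beta is given by its components f = beta(u), g = beta(w) *)
Definition beta_comp (f g : R -> R -> R) (j : bool) : R -> R -> R :=
  if j then f else g.

Definition covD (a b : R) (f g : R -> R -> R) (i j : bool) (x y : R) : R :=
  frameD i (beta_comp f g j) x y
  - ((nabla_coef a b i j).1 * f x y + (nabla_coef a b i j).2 * g x y).

Definition killing (a b : R) (f g : R -> R -> R) (i j : bool) (x y : R) : R :=
  (covD a b f g i j x y + covD a b f g j i x y) / 2.

End Defs.

(* Main.v *)
Require Import Defs.
From HB Require Import structures.
From mathcomp Require Import all_boot all_order all_algebra.
From mathcomp Require Import all_classical all_reals all_analysis.
From mathcomp Require Import ring lra.
Import Order.TTheory GRing.Theory Num.Theory.
Import numFieldNormedType.Exports.
Local Open Scope ring_scope.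

Lemma mvt_all (R : realType) (phi : R -> R) (a b : R) : a < b ->
  (forall x, derivable phi x 1) ->
  exists2 c, c \in `]a, b[ & phi b - phi a = derive1 phi c * (b - a).
Proof.
move=> ab dphi; apply: MVT => //.
- by move=> x _; rewrite derive1E; exact: derivableP.
- by apply: derivable_within_continuous => x _; exact: dphi.
Qed.

Lemma mvt_k (R : realType) (phi : R -> R) (a k : R) : 0 < k ->
  (forall x, derivable phi x 1) ->
  exists2 c, c \in `]a, a + k[ & phi (a + k) - phi a = derive1 phi c * k.
Proof.
move=> k0 dphi.
have ak : a < a + k by rewrite ltrDl.
have [c cI E] := @mvt_all R phi _ _ ak dphi.
exists c => //; rewrite E; congr (_ * _).
by rewrite addrAC subrr add0r.
Qed.

Lemma derive1B' (R : realType) (u v : R -> R) x : derivable u x 1 -> derivable v x 1 ->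
  derive1 (fun t => u t - v t) x = derive1 u x - derive1 v x.
Proof.
move=> du dv; have iu := derivableP du; have iv := derivableP dv.
rewrite !derive1E; apply: derive_val.
Qed.

Lemma schwarz_key (R : realType) (h : R -> R -> R) x0 y0 k :
  (forall x y, derivable (fun t => h t y) x 1) ->
  (forall x y, derivable (fun t => h x t) y 1) ->
  (forall x y, derivable (fun t => partial1 h x t) y 1) ->
  (forall x y, derivable (fun t => partial2 h t y) x 1) ->
  0 < k ->
  exists xi eta xi' eta',
    [/\ xi \in `]x0, x0 + k[, eta \in `]y0, y0 + k[, xi' \in `]x0, x0 + k[,
        eta' \in `]y0, y0 + k[ &
        partial2 (partial1 h) xi eta = partial1 (partial2 h) xi' eta'].
Proof.
move=> d1 d2 d12 d21 k0.
Arguments mvt_k {R} phi a {k}.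
Arguments derive1B' {R u v x}.
have xk : x0 < x0 + k by rewrite ltrDl.
have yk : y0 < y0 + k by rewrite ltrDl.
have [xi xiI E1] := mvt_k (fun t => h t (y0 + k) - h t y0) x0 k0
  (fun x => derivableB (d1 x (y0 + k)) (d1 x y0)).
have [eta etaI E2] := mvt_k (fun t => partial1 h xi t) y0 k0 (d12 xi).
have [eta' etaI' E3] := mvt_k (fun t => h (x0 + k) t - h x0 t) y0 k0
  (fun y => derivableB (d2 (x0 + k) y) (d2 x0 y)).
have [xi' xiI' E4] := mvt_k (fun t => partial2 h t eta') x0 k0 (fun x => d21 x eta').
exists xi, eta, xi', eta'; split; [exact: xiI|exact: etaI|exact: xiI'|exact: etaI'|].
have D1 : derive1 (fun t => h t (y0 + k) - h t y0) xi =
   partial1 h xi (y0 + k) - partial1 h xi y0 := derive1B' (d1 _ _) (d1 _ _).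
have D3 : derive1 (fun t => h (x0 + k) t - h x0 t) eta' =
   partial2 h (x0 + k) eta' - partial2 h x0 eta' := derive1B' (d2 _ _) (d2 _ _).
rewrite D1 in E1; rewrite D3 in E3.
have E2' : partial1 h xi (y0 + k) - partial1 h xi y0 =
  partial2 (partial1 h) xi eta * k := E2.
have E4' : partial2 h (x0 + k) eta' - partial2 h x0 eta' =
  partial1 (partial2 h) xi' eta' * k := E4.
rewrite E2' in E1; rewrite E4' in E3.
have kn : k != 0 by rewrite gt_eqF.
have H : partial2 (partial1 h) xi eta * k * k =
         partial1 (partial2 h) xi' eta' * k * k.
  rewrite -E1 -E3; ring.
by move: H => /(mulIf kn) /(mulIf kn).
Qed.
Lemma ballI (R : realType) (x0 d xi : R) : xi \in `]x0, x0 + d[ -> ball x0 d xi.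
Proof.
rewrite in_itv /= => /andP[h1 h2].
rewrite ball_itv /= in_itv /=; apply/andP; split.
  lra.
exact: h2.
Qed.
Lemma test (R : realType) (F : R * R -> R) p e : continuous F -> 0 < e ->
  exists2 d, 0 < d & forall q, ball p d q -> `|F p - F q| < e.
Proof.
move=> c e0.
have N : \forall q \near p, `|F p - F q| < e by exact: (@cvgr_dist_lt _ _ _ (nbhs p) _ F (F p) (c p) e e0).
have [d d0 Hd] := (nbhs_ballP _ _).1 N.
exists d => // q bq; exact: Hd.
Qed.

Lemma ballI' (R : realType) (x0 d d' xi : R) : d <= d' -> xi \in `]x0, x0 + d[ -> ball x0 d' xi.
Proof.
rewrite in_itv /= => hd /andP[h1 h2].
rewrite ball_itv /= in_itv /=; apply/andP; split; lra.
Qed.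

Lemma absfin (R : realType) (c1 c2 v : R) :
  `|c1 - v| < `|c2 - c1| / 2 -> `|c2 - v| < `|c2 - c1| / 2 -> 0 < `|c2 - c1| -> False.
Proof.
move=> B1 B2 pos.
have T := ler_distD v c2 c1.
rewrite [X in _ <= _ + X]distrC in T.
lra.
Qed.

Lemma schwarz (R : realType) (h : R -> R -> R) x0 y0 :
  (forall x y, derivable (fun t => h t y) x 1) ->
  (forall x y, derivable (fun t => h x t) y 1) ->
  (forall x y, derivable (fun t => partial1 h x t) y 1) ->
  (forall x y, derivable (fun t => partial2 h t y) x 1) ->
  continuous (fun p : R * R => partial2 (partial1 h) p.1 p.2) ->
  continuous (fun p : R * R => partial1 (partial2 h) p.1 p.2) ->
  partial1 (partial2 h) x0 y0 = partial2 (partial1 h) x0 y0.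
Proof.
move=> d1 d2 d12 d21 c12 c21.
apply/eqP; rewrite -subr_eq0 -normr_eq0.
have := normr_ge0 (partial1 (partial2 h) x0 y0 - partial2 (partial1 h) x0 y0).
rewrite le0r => /orP[//|pos].
have e0 : 0 < `|partial1 (partial2 h) x0 y0 - partial2 (partial1 h) x0 y0| / 2.
  by rewrite divr_gt0.
have [da pa Ha] := @test R _ (x0, y0) _ c12 e0.
have [db pb Hb] := @test R _ (x0, y0) _ c21 e0.
have dpos : 0 < Num.min da db by rewrite lt_min pa pb.
have [xi [eta [xi' [eta' [i1 i2 i3 i4 E]]]]] := @schwarz_key R h x0 y0 _ d1 d2 d12 d21 dpos.
have m1 : Num.min da db <= da by rewrite ge_min lexx.
have m2 : Num.min da db <= db by rewrite ge_min lexx orbT.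
have B1 := Ha (xi, eta) (conj (@ballI' R _ _ _ _ m1 i1) (@ballI' R _ _ _ _ m1 i2)).
have B2 := Hb (xi', eta') (conj (@ballI' R _ _ _ _ m2 i3) (@ballI' R _ _ _ _ m2 i4)).
simpl in B1, B2.
rewrite E in B1.
exfalso; exact: (@absfin R _ _ _ B1 B2 pos).
Qed.

Lemma lin1 (R : realType) (c0 c1 c2 c3 : R) (h1 h2 h3 : R -> R) (x : R) :
  derivable h1 x 1 -> derivable h2 x 1 -> derivable h3 x 1 ->
  derive1 (fun t => c0 + c1 * h1 t + c2 * h2 t + c3 * h3 t) x =
  c1 * derive1 h1 x + c2 * derive1 h2 x + c3 * derive1 h3 x.
Proof.
move=> d1 d2 d3.
have i1 := derivableP d1; have i2 := derivableP d2; have i3 := derivableP d3.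
rewrite !derive1E; apply: derive_val.
have -> : c1 * 'D_1 h1 x + c2 * 'D_1 h2 x + c3 * 'D_1 h3 x =
  0 + c1 *: 'D_1 h1 x + c2 *: 'D_1 h2 x + c3 *: 'D_1 h3 x by rewrite add0r.
apply: is_deriveD; apply: is_deriveD; apply: is_deriveD.
Qed.

Lemma dexp2 (R : realType) (k : R -> R) (y : R) : derivable k y 1 ->
 derive1 (fun t => expR (2*t) * k t) y = 2 * expR (2*y) * k y + expR (2*y) * derive1 k y.
Proof.
move=> dk; have ik := derivableP dk.
rewrite !derive1E; apply: derive_val.
apply: trigger_derive.
rewrite /GRing.scale /=; ring.
Qed.

Definition Uo (R : realType) (h : R -> R -> R) : R -> R -> R :=
  fun x y => expR (2 * y) * partial1 h x y.
Definition Wo (R : realType) (h : R -> R -> R) : R -> R -> R :=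
  fun x y => - partial2 h x y.
Arguments Uo {R}. Arguments Wo {R}.

Lemma iter_app (R : realType) (s' s : seq bool) (f : R -> R -> R) :
  iter_partial s' (iter_partial s f) = iter_partial (s' ++ s) f.
Proof. by elim: s' => //= c s' ->. Qed.

Lemma smooth_iter (R : realType) (s : seq bool) (f : R -> R -> R) :
  smooth2 f -> smooth2 (iter_partial s f).
Proof. by move=> H s'; rewrite iter_app; exact: H. Qed.

Lemma sm_dx (R : realType) (f : R -> R -> R) : smooth2 f ->
  forall x y, derivable (fun t => f t y) x 1.
Proof. by move=> H x y; have [/(_ x y) [] ] := H [::]. Qed.

Lemma sm_dy (R : realType) (f : R -> R -> R) : smooth2 f ->
  forall x y, derivable (fun t => f x t) y 1.
Proof. by move=> H x y; have [/(_ x y) [] ] := H [::]. Qed.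

Lemma sm_p1 (R : realType) (f : R -> R -> R) : smooth2 f -> smooth2 (partial1 f).
Proof. exact: (@smooth_iter R [:: true]). Qed.

Lemma sm_p2 (R : realType) (f : R -> R -> R) : smooth2 f -> smooth2 (partial2 f).
Proof. exact: (@smooth_iter R [:: false]). Qed.

Arguments sm_dx {R f}. Arguments sm_dy {R f}. Arguments sm_p1 {R f}. Arguments sm_p2 {R f}.

Lemma comm (R : realType) (h : R -> R -> R) (x y : R) : smooth2 h ->
  Uo (partial2 h) x y = - Wo (Uo h) x y - 2 * Uo h x y.
Proof.
move=> H.
have S := @schwarz R h x y (sm_dx H) (sm_dy H) (sm_dy (sm_p1 H)) (sm_dx (sm_p2 H))
  (H [:: false; true]).2 (H [:: true; false]).2.
have D := @dexp2 R (fun t => partial1 h x t) y (sm_dy (sm_p1 H) x y).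
rewrite /Uo /Wo.
change (expR (2 * y) * partial1 (partial2 h) x y =
  - - derive1 (fun t => expR (2 * t) * partial1 h x t) y - 2 * (expR (2 * y) * partial1 h x y)).
rewrite D S.
change (expR (2 * y) * partial2 (partial1 h) x y = - - (2 * expR (2 * y) * partial1 h x y +
   expR (2 * y) * partial2 (partial1 h) x y) - 2 * (expR (2 * y) * partial1 h x y)).
ring.
Qed.

Lemma Ulin (R : realType) (c0 c1 c2 c3 : R) (h1 h2 h3 : R -> R -> R) (x y : R) :
  smooth2 h1 -> smooth2 h2 -> smooth2 h3 ->
  Uo (fun x y => c0 + c1 * h1 x y + c2 * h2 x y + c3 * h3 x y) x y =
  c1 * Uo h1 x y + c2 * Uo h2 x y + c3 * Uo h3 x y.
Proof.
move=> H1 H2 H3.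
have L := @lin1 R c0 c1 c2 c3 (fun t => h1 t y) (fun t => h2 t y) (fun t => h3 t y) x
  (sm_dx H1 x y) (sm_dx H2 x y) (sm_dx H3 x y).
rewrite /Uo /partial1 L; ring.
Qed.

Lemma Wlin (R : realType) (c0 c1 c2 c3 : R) (h1 h2 h3 : R -> R -> R) (x y : R) :
  smooth2 h1 -> smooth2 h2 -> smooth2 h3 ->
  Wo (fun x y => c0 + c1 * h1 x y + c2 * h2 x y + c3 * h3 x y) x y =
  c1 * Wo h1 x y + c2 * Wo h2 x y + c3 * Wo h3 x y.
Proof.
move=> H1 H2 H3.
have L := @lin1 R c0 c1 c2 c3 (fun t => h1 x t) (fun t => h2 x t) (fun t => h3 x t) y
  (sm_dy H1 x y) (sm_dy H2 x y) (sm_dy H3 x y).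
rewrite /Wo /partial2 L; ring.
Qed.
Arguments Ulin {R c0 c1 c2 c3 h1 h2 h3 x y}.
Arguments Wlin {R c0 c1 c2 c3 h1 h2 h3 x y}.
Arguments comm {R h}.

Lemma derivation (R : realType) (a b S1 S2 S3 : R) (f g : R -> R -> R) :
  a * b = 0 -> smooth2 f -> smooth2 g ->
  (forall x y, Uo f x y = S1 + (3 + a) * f x y + (- a) * g x y) ->
  (forall x y, Wo g x y = S3 + (a + b - 1) * f x y + (2 - a) * g x y) ->
  (forall x y, Uo g x y = 2 * S2 + (2 * a - 2) * f x y + (6 - 2 * a) * g x y + partial2 f x y) ->
  forall x y, ((- 11 - 9 * b - 4 * a + 5 * a * b) * S1 + (- 12 + 8 * a - 3 * a * b) * S2 + (27 - 4 * a) * S3) + (- 48 - 12 * a + 5 * a * b + 2 * a * a * b) * f x y + (18 + 12 * a - 2 * a * a * b) * g x y + 0 * partial2 f x y = 0 /\ ((- 48 + 48 * b + 48 * a - 7 * a * b + 3 * a * b * b + 4 * a * a * b - a * a * b * b) * S1 + (- 96 * a + 12 * a * b - 8 * a * a * b + a * a * b * b) * S2 + (- 216 + 48 * a - 9 * a * b + 4 * a * a * b) * S3) + (72 - 72 * b - 72 * a + 72 * a * b + 12 * a * a * b + 3 * a * a * b * b) * f x y + (- 432 + 72 * a - 30 * a * b - 12 * a * a * b) * g x y + 0 * partial2 f x y = 0.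
Proof.
move=> hab Hf Hg HUf HWg HUg.
have Hp := sm_p2 Hf.
have Wf : forall x y, Wo f x y = - partial2 f x y by [].
have EUf : Uo f = (fun x y => S1 + (3 + a) * f x y + (- a) * g x y + 0 * g x y).
  by apply/funext => x; apply/funext => y; rewrite HUf; ring.
have EUg : Uo g = (fun x y => 2 * S2 + (2 * a - 2) * f x y + (6 - 2 * a) * g x y + 1 * partial2 f x y).
  by apply/funext => x; apply/funext => y; rewrite HUg; ring.
have Ep2g : partial2 g = (fun x y => - S3 + (- (a + b - 1)) * f x y + (- (2 - a)) * g x y + 0 * g x y).
  apply/funext => x; apply/funext => y.
  have E : - partial2 g x y = S3 + (a + b - 1) * f x y + (2 - a) * g x y := HWg x y.
  lra.
have EUp : forall x y, Uo (partial2 f) x y = ((- 2) * S1 + 0 * S2 + (a) * S3) + (- 6 - 3 * a + a * b + a * a) * f x y + (4 * a - a * a) * g x y + (3 + a) * partial2 f x y.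
  move=> x y; have C := comm x y Hf.
  rewrite HUf in C; rewrite EUf (Wlin Hf Hg Hg) HWg Wf in C.
  lra.
have EUpf : Uo (partial2 f) = (fun x y => ((- 2) * S1 + 0 * S2 + (a) * S3) + (- 6 - 3 * a + a * b + a * a) * f x y + (4 * a - a * a) * g x y + (3 + a) * partial2 f x y).
  by apply/funext => x; apply/funext => y; exact: EUp.
have EWp : forall x y, Wo (partial2 f) x y = ((- 1 + b + a) * S1 + (- 2 * a) * S2 + (- 6 + 2 * a) * S3) + (3 - 3 * b - 4 * a + 3 * a * b + a * a) * f x y + (- 12 + 5 * a - a * b - a * a) * g x y + (- 2 + a) * partial2 f x y.
  move=> x y; have C := comm x y Hg.
  rewrite HUg in C; rewrite Ep2g (Ulin Hf Hg Hg) HUf HUg in C.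
  rewrite EUg (Wlin Hf Hg Hp) HWg Wf in C.
  lra.
have Ep2p : partial2 (partial2 f) = (fun x y => ((1 - b - a) * S1 + (2 * a) * S2 + (6 - 2 * a) * S3) + (- 3 + 3 * b + 4 * a - 3 * a * b - a * a) * f x y + (12 - 5 * a + a * b + a * a) * g x y + (2 - a) * partial2 f x y).
  apply/funext => x; apply/funext => y.
  have E : - partial2 (partial2 f) x y = ((- 1 + b + a) * S1 + (- 2 * a) * S2 + (- 6 + 2 * a) * S3) + (3 - 3 * b - 4 * a + 3 * a * b + a * a) * f x y + (- 12 + 5 * a - a * b - a * a) * g x y + (- 2 + a) * partial2 f x y := EWp x y.
  lra.
have R1 : forall x y, ((14 - 6 * b - 8 * a + 2 * a * b) * S1 + (- 24 + 16 * a - 2 * a * b) * S2 + (18 - 8 * a) * S3) + (48 - 24 * a - 6 * a * b) * f x y + (- 36 + 24 * a) * g x y + (- 24) * partial2 f x y = 0.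
  move=> x y; have C := comm x y Hp.
  rewrite EUp in C; rewrite Ep2p (Ulin Hf Hg Hp) HUf HUg EUp in C.
  rewrite EUpf (Wlin Hf Hg Hp) HWg Wf EWp in C.
  lra.
have E1 : (fun x y => ((14 - 6 * b - 8 * a + 2 * a * b) * S1 + (- 24 + 16 * a - 2 * a * b) * S2 + (18 - 8 * a) * S3) + (48 - 24 * a - 6 * a * b) * f x y + (- 36 + 24 * a) * g x y + (- 24) * partial2 f x y) = (fun x y => 0 + 0 * f x y + 0 * g x y + 0 * partial2 f x y).
  apply/funext => x; apply/funext => y.
  have := R1 x y; lra.
move=> x y; split.
  have C : Uo (fun x y => ((14 - 6 * b - 8 * a + 2 * a * b) * S1 + (- 24 + 16 * a - 2 * a * b) * S2 + (18 - 8 * a) * S3) + (48 - 24 * a - 6 * a * b) * f x y + (- 36 + 24 * a) * g x y + (- 24) * partial2 f x y) x y = Uo (fun x y => 0 + 0 * f x y + 0 * g x y + 0 * partial2 f x y) x y by rewrite E1.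
  rewrite (Ulin Hf Hg Hp) (Ulin Hf Hg Hp) HUf HUg EUp in C.
  have := R1 x y; lra.
have C : Wo (fun x y => ((14 - 6 * b - 8 * a + 2 * a * b) * S1 + (- 24 + 16 * a - 2 * a * b) * S2 + (18 - 8 * a) * S3) + (48 - 24 * a - 6 * a * b) * f x y + (- 36 + 24 * a) * g x y + (- 24) * partial2 f x y) x y = Wo (fun x y => 0 + 0 * f x y + 0 * g x y + 0 * partial2 f x y) x y by rewrite E1.
rewrite (Wlin Hf Hg Hp) (Wlin Hf Hg Hp) Wf HWg EWp in C.
have R1m : (6 * a * b) * (((14 - 6 * b - 8 * a + 2 * a * b) * S1 + (- 24 + 16 * a - 2 * a * b) * S2 + (18 - 8 * a) * S3) + (48 - 24 * a - 6 * a * b) * f x y + (- 36 + 24 * a) * g x y + (- 24) * partial2 f x y) = 0 by rewrite R1 mulr0.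
lra.
Qed.

Lemma cramer (R : realType) (Pc Pf Pg Qc Qf Qg F G X F0 G0 X0 : R) :
  Pc + Pf * F + Pg * G + 0 * X = 0 -> Qc + Qf * F + Qg * G + 0 * X = 0 ->
  Pc + Pf * F0 + Pg * G0 + 0 * X0 = 0 -> Qc + Qf * F0 + Qg * G0 + 0 * X0 = 0 ->
  (F - F0) * (Pf * Qg - Pg * Qf) = 0 /\ (G - G0) * (Pf * Qg - Pg * Qf) = 0.
Proof.
move=> h1 h2 h3 h4; split.
  have -> : (F - F0) * (Pf * Qg - Pg * Qf) =
    Qg * ((Pc + Pf * F + Pg * G + 0 * X) - (Pc + Pf * F0 + Pg * G0 + 0 * X0))
    - Pg * ((Qc + Qf * F + Qg * G + 0 * X) - (Qc + Qf * F0 + Qg * G0 + 0 * X0)) by ring.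
  by rewrite h1 h2 h3 h4 !subrr !mulr0 subrr.
have -> : (G - G0) * (Pf * Qg - Pg * Qf) =
  Pf * ((Qc + Qf * F + Qg * G + 0 * X) - (Qc + Qf * F0 + Qg * G0 + 0 * X0))
  - Qf * ((Pc + Pf * F + Pg * G + 0 * X) - (Pc + Pf * F0 + Pg * G0 + 0 * X0)) by ring.
by rewrite h1 h2 h3 h4 !subrr !mulr0 subrr.
Qed.

Lemma d0 (R : realType) (c t : R) : derive1 (fun _ : R => c) t = 0.
Proof. exact: derive1_cst. Qed.

Lemma p1c (R : realType) (c x y : R) : partial1 (fun _ _ => c) x y = 0.
Proof. exact: derive1_cst. Qed.
Lemma p2c (R : realType) (c x y : R) : partial2 (fun _ _ => c) x y = 0.
Proof. exact: derive1_cst. Qed.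

Lemma gen_case (R : realType) (a b : R) (S : bool -> bool -> R) (f g : R -> R -> R)
  (Pc Pf Pg Qc Qf Qg : R) :
  (forall x y, Pc + Pf * f x y + Pg * g x y + 0 * partial2 f x y = 0 /\
               Qc + Qf * f x y + Qg * g x y + 0 * partial2 f x y = 0) ->
  Pf * Qg - Pg * Qf != 0 ->
  (forall i j x y, killing a b f g i j x y = S i j) ->
  exists alpha1 alpha2 : R,
     forall i j x y,
       killing a b (fun _ _ => alpha1) (fun _ _ => alpha2) i j x y = S i j.
Proof.
move=> D detn0 Hk.
have Cf : forall x y, f x y = f 0 0 /\ g x y = g 0 0.
  move=> x y.
  have [h1 h2] := D x y; have [h3 h4] := D 0 0.
  have [c1 c2] := @cramer R _ _ _ _ _ _ _ _ _ _ _ _ h1 h2 h3 h4.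
  split; apply/eqP; rewrite -subr_eq0.
    by move/eqP: c1; rewrite mulf_eq0 (negbTE detn0) orbF.
  by move/eqP: c2; rewrite mulf_eq0 (negbTE detn0) orbF.
have Ef : f = (fun _ _ => f 0 0) by apply/funext => x; apply/funext => y; exact: (Cf x y).1.
have Eg : g = (fun _ _ => g 0 0) by apply/funext => x; apply/funext => y; exact: (Cf x y).2.
move: (f 0 0) (g 0 0) Ef Eg => al1 al2 Ef Eg.
exists al1, al2 => i j x y; rewrite -Ef -Eg; exact: Hk.
Qed.

Theorem lemma12p5 (R : realType) (a b : R) (hab : a * b = 0)
  (S : bool -> bool -> R) (Ssym : forall i j, S i j = S j i) :
  (exists f g : R -> R -> R, smooth2 f /\ smooth2 g /\
     forall i j x y, killing a b f g i j x y = S i j) ->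
  exists alpha1 alpha2 : R,
     forall i j x y,
       killing a b (fun _ _ => alpha1) (fun _ _ => alpha2) i j x y = S i j.
Proof.
move=> [f [g [Hf [Hg Hk]]]].
have HUf : forall x y, Uo f x y = S true true + (3 + a) * f x y + (- a) * g x y.
  move=> x y; have E : (Uo f x y - ((3 + a) * f x y + (- a) * g x y) +
           (Uo f x y - ((3 + a) * f x y + (- a) * g x y))) / 2 = S true true := Hk true true x y.
  lra.
have HWg : forall x y, Wo g x y = S false false + (a + b - 1) * f x y + (2 - a) * g x y.
  move=> x y; have E : (Wo g x y - ((a + b - 1) * f x y + (2 - a) * g x y) +
           (Wo g x y - ((a + b - 1) * f x y + (2 - a) * g x y))) / 2 = S false false := Hk false false x y.
  lra.
have HUg : forall x y, Uo g x y = 2 * S true false + (2 * a - 2) * f x y + (6 - 2 * a) * g x y + partial2 f x y.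
  move=> x y; have E : (Uo g x y - (a * f x y + (3 - a) * g x y) +
           (- partial2 f x y - ((a - 2) * f x y + (3 - a) * g x y))) / 2 = S true false := Hk true false x y.
  lra.
have D := @derivation R a b _ _ _ f g hab Hf Hg HUf HWg HUg.
have [det0|detn0] := eqVneq ((- 48 - 12 * a + 5 * a * b + 2 * a * a * b) * (- 432 + 72 * a - 30 * a * b - 12 * a * a * b) - (18 + 12 * a - 2 * a * a * b) * (72 - 72 * b - 72 * a + 72 * a * b + 12 * a * a * b + 3 * a * a * b * b)) 0; last first.
  exact: (@gen_case R a b S f g _ _ _ _ _ _ D detn0 Hk).
have [h3 h4] := D 0 0.
have [a0|b0] : a = 0 \/ b = 0.
  have /orP[/eqP ->|/eqP ->] : (a == 0) || (b == 0) by rewrite -mulf_eq0 hab.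
    by left.
  by right.
- have bm : b = -15.
    have e : 1296 * (15 + b) = ((- 48 - 12 * a + 5 * a * b + 2 * a * a * b) * (- 432 + 72 * a - 30 * a * b - 12 * a * a * b) - (18 + 12 * a - 2 * a * a * b) * (72 - 72 * b - 72 * a + 72 * a * b + 12 * a * a * b + 3 * a * a * b * b)) by rewrite a0; ring.
    rewrite det0 in e; lra.
  rewrite a0 bm in h3 h4.
  have L : 46 * S true true - 6 * S true false + 9 * S false false = 0.
    have e3 : 124 * S true true - 12 * S true false + 27 * S false false
      - 48 * f 0 0 + 18 * g 0 0 = 0 by rewrite -[RHS]h3; ring.
    have e4 : - 768 * S true true - 216 * S false false
      + 1152 * f 0 0 - 432 * g 0 0 = 0 by rewrite -[RHS]h4; ring.
    lra.
  clear h3 h4 D Hk HUf HUg HWg.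
  exists (- S true true / 3), ((- S true true / 3 - S true false) / 3) => i j x y.
  rewrite a0 bm.
  case: i; case: j; cbv [killing covD frameD beta_comp nabla_coef fst snd]; rewrite ?p1c ?p2c ?[S false true]Ssym; lra.
- have am : a = -9.
    have e : 2160 * (9 + a) = ((- 48 - 12 * a + 5 * a * b + 2 * a * a * b) * (- 432 + 72 * a - 30 * a * b - 12 * a * a * b) - (18 + 12 * a - 2 * a * a * b) * (72 - 72 * b - 72 * a + 72 * a * b + 12 * a * a * b + 3 * a * a * b * b)) by rewrite b0; ring.
    rewrite det0 in e; lra.
  rewrite am b0 in h3 h4.
  have L : 5 * S true true - 12 * S true false + 9 * S false false = 0.
    have e3 : 25 * S true true - 84 * S true false + 63 * S false false
      + 60 * f 0 0 - 90 * g 0 0 = 0 by rewrite -[RHS]h3; ring.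
    have e4 : - 480 * S true true + 864 * S true false - 648 * S false false
      + 720 * f 0 0 - 1080 * g 0 0 = 0 by rewrite -[RHS]h4; ring.
    lra.
  clear h3 h4 D Hk HUf HUg HWg.
  exists ((S true false + 12 * (S false false - S true false)) / 10),
         (S false false - S true false) => i j x y.
  rewrite am b0.
  case: i; case: j; cbv [killing covD frameD beta_comp nabla_coef fst snd]; rewrite ?p1c ?p2c ?[S false true]Ssym; lra.
Qed.
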